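(* Let $f=f^{(L)}\circ\cdots\circ f^{(1)}$ with $f^{(\ell)}(\mathbf{u})=\sigma(\mathbf{W}^{(\ell)}\mathbf{u}+\mathbf{b}^{(\ell)})$, $\mathbf{W}^{(\ell)}\in\mathbb{R}^{D^{(\ell+1)}\times D^{(\ell)}}$, $\mathbf{b}^{(\ell)}\in\mathbb{R}^{D^{(\ell+1)}}$, where $\sigma$ is continuous, affine on $(-\infty,0]$ and on $[0,\infty)$, applied coordinatewise. Let $\mathbf{V}\in\mathbb{R}^{P\times D^{(1)}}$ have rows $\mathbf{v}_1^T,\dots,\mathbf{v}_P^T$ and let $R$ be their convex hull. Define recursively $\mathbf{V}^{(1)}=\mathbf{V}$ and, for $\ell=1,\dots,L$: $\mathbf{H}^{(\ell)}=\mathbf{V}^{(\ell)}(\mathbf{W}^{(\ell)})^T+\mathbf{1}_P(\mathbf{b}^{(\ell)})^T$; $s^{(\ell)}_k=1$ if $\#\{i:\mathbf{H}^{(\ell)}_{i,k}>0\}\ge P/2$ and $s^{(\ell)}_k=-1$ otherwise; $c^{(\ell)}_k=s^{(\ell)}_k\max_{p}\max(0,-\mathbf{H}^{(\ell)}_{p,k}s^{(\ell)}_k)$; and $\mathbf{V}^{(\ell+1)}=\sigma(\mathbf{V}^{(\ell)}(\mathbf{W}^{(\ell)})^T+\mathbf{1}_P(\mathbf{b}^{(\ell)}+\mathbf{c}^{(\ell)})^T)$. Let $\tilde f=\tilde f^{(L)}\circ\cdots\circ\tilde f^{(1)}$ with $\tilde f^{(\ell)}(\mathbf{u})=\sigma(\mathbf{W}^{(\ell)}\mathbf{u}+\mathbf{b}^{(\ell)}+\mathbf{c}^{(\ell)})$.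 Then, for arbitrary weights $\mathbf{W}^{(\ell)}$ and biases $\mathbf{b}^{(\ell)}$, $\tilde f$ is affine on $R$.
   Context: $\mathbf{1}_P$ is the all-ones vector of length $P$; $\sigma$ applied to a matrix acts entrywise. The network $\tilde f$ is the ''POLICEd'' network obtained by shifting each layer's bias by $\mathbf{c}^{(\ell)}$, computed from the vertices propagated through the already-shifted previous layers. *)

(* Defs.v *)
From HB Require Import structures.
From mathcomp Require Import all_boot all_order all_algebra.
From mathcomp Require Import all_classical all_reals all_analysis.
Set Implicit Arguments. Unset Strict Implicit. Unset Printing Implicit Defensive.
Import Order.TTheory GRing.Theory Num.Theory numFieldTopology.Exports numFieldNormedType.Exports.
Local Open Scope ring_scope.

(* Layers are 0-indexed: layer n (paper's l = n+1) maps R^(D n) -> R^(D n.+1).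
   Vectors are column vectors; V : 'M_(P, D 0) has the vertices as rows. *)
Section POLICE.
Variable R : realType.
Variable sigma : R -> R.
Variable P : nat.
Variable D : nat -> nat.
Variable W : forall n, 'M[R]_(D n.+1, D n).
Variable b : forall n, 'cV[R]_(D n.+1).

Definition Hmat n (Vn : 'M[R]_(P, D n)) : 'M[R]_(P, D n.+1) :=
  \matrix_(i < P, k < D n.+1) ((Vn *m (W n)^T) i k + b n k ord0).

Definition sgn_vec n (H : 'M[R]_(P, D n.+1)) : 'cV[R]_(D n.+1) :=
  \col_(k < D n.+1)
    (if (P <= 2 * #|[set i : 'I_P | (H i k > 0)%R]|)%N then 1 else -1).

Definition cvec n (H : 'M[R]_(P, D n.+1)) : 'cV[R]_(D n.+1) :=
  \col_(k < D n.+1)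
    (sgn_vec H k ord0 *
       \big[Num.max/0]_(p < P) Num.max 0 (- H p k * sgn_vec H k ord0)).

Fixpoint Vprop (V : 'M[R]_(P, D 0)) (n : nat) : 'M[R]_(P, D n) :=
  match n return 'M[R]_(P, D n) with
  | 0 => V
  | n'.+1 =>
      let H := Hmat (Vprop V n') in
      map_mx sigma (\matrix_(i < P, k < D n'.+1) (H i k + cvec H k ord0))
  end.

Definition shift (V : 'M[R]_(P, D 0)) n : 'cV[R]_(D n.+1) :=
  cvec (Hmat (Vprop V n)).

Fixpoint net (c : forall n, 'cV[R]_(D n.+1)) (n : nat) : 'cV[R]_(D 0) -> 'cV[R]_(D n) :=
  match n return 'cV[R]_(D 0) -> 'cV[R]_(D n) with
  | 0 => fun u => u
  | n'.+1 => fun u => map_mx sigma (W n' *m net c n' u + b n' + c n')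
  end.

Definition policed (V : 'M[R]_(P, D 0)) L := net (shift V) L.
End POLICE.

Definition in_rows_hull (R : realType) (P m : nat) (V : 'M[R]_(P, m)) (x : 'cV[R]_m) :=
  exists lam : 'I_P -> R, (forall i, 0 <= lam i) /\ \sum_(i < P) lam i = 1 /\
    x = \sum_(i < P) lam i *: (row i V)^T.

Definition affine_on (R : realType) (m k : nat) (S : 'cV[R]_m -> Prop)
    (f : 'cV[R]_m -> 'cV[R]_k) :=
  exists (A : 'M[R]_(k, m)) (a : 'cV[R]_k), forall x, S x -> f x = A *m x + a.

Definition two_piece_affine (R : realType) (sigma : R -> R) :=
  continuous sigma /\
  (exists a1 c1 : R, forall x, x <= 0 -> sigma x = a1 * x + c1) /\
  (exists a2 c2 : R, forall x, 0 <= x -> sigma x = a2 * x + c2).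

(* Main.v *)
Require Import Defs.
From HB Require Import structures.
From mathcomp Require Import all_boot all_order all_algebra.
From mathcomp Require Import all_classical all_reals all_analysis.
From mathcomp Require Import lra.
Import Order.TTheory GRing.Theory Num.Theory numFieldTopology.Exports numFieldNormedType.Exports.
Local Open Scope ring_scope.

Section Pf.
Variable R : realType.
Variable sigma : R -> R.
Variable P : nat.
Variable D : nat -> nat.
Variable W : forall n, 'M[R]_(D n.+1, D n).
Variable b : forall n, 'cV[R]_(D n.+1).
Variable V : 'M[R]_(P, D 0%N).

Lemma Vprop_net n i k :
  Vprop sigma W b V n i k = Defs.net sigma W b (Defs.shift sigma W b V) n (row i V)^T k ord0.
Proof.
elim: n i k => [|n IH] i k /=; first by rewrite !mxE.
rewrite !mxE /Defs.shift; congr (sigma (_ + _ + _)).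
apply: eq_bigr => j _; by rewrite !mxE IH mulrC.
Qed.

Lemma sign_fact m (H : 'M[R]_(P, D m.+1)) i k :
  if (P <= 2 * #|[set i : 'I_P | (H i k > 0)%R]|)%N
  then 0 <= H i k + cvec H k ord0 else H i k + cvec H k ord0 <= 0.
Proof.
rewrite /cvec /sgn_vec !mxE.
set cnd := (P <= _)%N.
have hM := le_bigmax 0 (fun p : 'I_P => Num.max 0 (- H p k * (if cnd then 1 else -1))) i.
rewrite /= in hM.
case: (boolP cnd) => Ec; [rewrite Ec in hM * | rewrite (negbTE Ec) in hM *].
  set M := \big[Num.max/0]_(p < P) _ in hM *.
rewrite mul1r; rewrite mulr1 in hM.
  have h0 : - H i k <= Num.max 0 (- H i k) by rewrite le_max lexx orbT.
  have := le_trans h0 hM; lra.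
set M := \big[Num.max/0]_(p < P) _ in hM *.
rewrite mulN1r; rewrite mulrN1 opprK in hM.
have h0 : H i k <= Num.max 0 (H i k) by rewrite le_max lexx orbT.
have := le_trans h0 hM; lra.
Qed.

Lemma vert_hull i : in_rows_hull V (row i V)^T.
Proof.
exists (fun j => (j == i)%:R); split; first by move=> j; rewrite ler0n.
split.
  rewrite (bigD1 i) //= eqxx big1 ?addr0 // => j /negbTE ->; done.
rewrite (bigD1 i) //= eqxx scale1r big1 ?addr0 // => j /negbTE ->.
by rewrite scale0r.
Qed.

Lemma main_ind n : two_piece_affine sigma ->
  affine_on (in_rows_hull V) (Defs.net sigma W b (Defs.shift sigma W b V) n).
Proof.
case=> _ [[a1 [c1 h1]] [a2 [c2 h2]]].
elim: n => [|n [A [a IH]]].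
  by exists 1%:M, 0 => x _ /=; rewrite mul1mx addr0.
set H := Hmat W b (Vprop sigma W b V n).
set cnd := fun k : 'I_(D n.+1) => (P <= 2 * #|[set i : 'I_P | (H i k > 0)%R]|)%N.
set Dg := diag_mx (\row_k (if cnd k then a2 else a1)).
set g := \col_k (if cnd k then c2 else c1).
set d := W n *m a + b n + Defs.shift sigma W b V n.
exists (Dg *m (W n *m A)), (Dg *m d + g) => x hx.
have [lam [lam0 [lam1 xE]]] := hx.
rewrite /= IH //; rewrite xE.
set c := Defs.shift sigma W b V n.
set z := W n *m (A *m (\sum_(i < P) lam i *: (row i V)^T) + a) + b n + c.
have zE : Dg *m (W n *m A) *m (\sum_(i < P) lam i *: (row i V)^T) + (Dg *m d + g)
   = Dg *m z + g.
  by rewrite /z /d !mulmxDr !mulmxA !addrA.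
rewrite zE; apply/matrixP => k j; rewrite (ord1 j) [LHS]mxE [RHS]mxE.
have zk : z k ord0 = \sum_(i < P) lam i * (H i k + cvec H k ord0).
  rewrite /z.
  have -> : A *m (\sum_(i < P) lam i *: (row i V)^T) + a =
            \sum_(i < P) lam i *: (A *m (row i V)^T + a).
    rewrite (eq_bigr (fun i => lam i *: (A *m (row i V)^T) + lam i *: a)); last first.
      by move=> i _; rewrite scalerDr.
    rewrite big_split /= -scaler_suml lam1 scale1r mulmx_sumr.
    by congr (_ + _); apply: eq_bigr => i _; rewrite scalemxAr.
  have -> : W n *m (\sum_(i < P) lam i *: (A *m (row i V)^T + a)) + b n + c =
            \sum_(i < P) lam i *: (W n *m (A *m (row i V)^T + a) + b n + c).
    symmetry.
    rewrite (eq_bigr (fun i => lam i *: (W n *m (A *m (row i V)^T + a))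
                                + lam i *: (b n + c))); last first.
      by move=> i _; rewrite -addrA scalerDr.
    rewrite big_split /= -scaler_suml lam1 scale1r mulmx_sumr addrA.
    by congr (_ + _ + _); apply: eq_bigr => i _; rewrite scalemxAr.
  rewrite summxE; apply: eq_bigr => i _.
  rewrite [LHS]mxE -IH; last exact: vert_hull.
  have Hik : H i k = (W n *m Defs.net sigma W b (Defs.shift sigma W b V) n (row i V)^T) k ord0 + b n k ord0.
    rewrite /H /Hmat mxE; congr (_ + _); rewrite !mxE.
    by apply: eq_bigr => j0 _; rewrite !mxE -Vprop_net mulrC.
  by rewrite Hik [in LHS]mxE [in LHS]mxE.
have gk : g k ord0 = if cnd k then c2 else c1 by rewrite /g mxE.
rewrite mul_diag_mx [in RHS]mxE [in RHS]mxE gk.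
rewrite /cnd in zk *.
case E: (P <= 2 * #|[set i : 'I_P | (H i k > 0)%R]|)%N.
  rewrite h2; first by [].
  rewrite zk; apply: sumr_ge0 => i _; apply: mulr_ge0; first exact: lam0.
  have := sign_fact _ H i k; rewrite E; exact.
rewrite h1; first by [].
rewrite zk; rewrite -oppr_ge0 -sumrN; apply: sumr_ge0 => i _.
rewrite -mulrN; apply: mulr_ge0; first exact: lam0.
rewrite oppr_ge0; have := sign_fact _ H i k; rewrite E; exact.
Qed.
End Pf.

Theorem mainTheorem3 (R : realType) (sigma : R -> R) (P L : nat) (D : nat -> nat)
  (W : forall n, 'M[R]_(D n.+1, D n)) (b : forall n, 'cV[R]_(D n.+1))
  (V : 'M[R]_(P, D 0%N)) :
  two_piece_affine sigma ->
  affine_on (in_rows_hull V) (policed sigma W b V L).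
Proof. exact: main_ind. Qed.
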